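(* Let $s$ be an integer with $3\le s\le 8$, and let $P(z)=1+\sum_{k=1}^s a_kz^k$ with real coefficients. Suppose that $P^{(k)}(-2s)\ge 0$ for all $k=0,1,\dots,s$, and that \[ \frac12\left(a_1^2-\frac{(1-a_1)^2}{s}\right)\ge a_2. \] Then $P(z)=\left(1+\frac{z}{2s}\right)^s$. *)

(* Defs.v *)
(* real coefficients modelled by an arbitrary real closed field R. *)
From HB Require Import structures.
From mathcomp Require Import all_boot all_order all_algebra.
Set Implicit Arguments. Unset Strict Implicit. Unset Printing Implicit Defensive.
Import Order.TTheory GRing.Theory Num.Theory.
Local Open Scope ring_scope.

Definition Ppoly (R : rcfType) (s : nat) (a : nat -> R) : {poly R} :=
  1 + \sum_(1 <= k < s.+1) a k *: 'X^k.

(* Main.v *)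
Require Import Defs.
From HB Require Import structures.
From mathcomp Require Import all_boot all_order all_algebra.
From mathcomp Require Import ring lra.
Import Order.TTheory GRing.Theory Num.Theory.
Local Open Scope ring_scope.

Lemma taylor_poly (R : comNzRingType) (p : {poly R}) x0 n : (size p <= n)%N ->
  p = \sum_(i < n) (p^`N(i)).[x0] *: ('X - x0%:P)^+i.
Proof.
move=> hs.
have := @nderiv_taylor_wide _ n (p^:P) x0%:P ('X - x0%:P) (mulrC _ _).
rewrite size_map_polyC => /(_ hs).
rewrite addrC subrK.
move=> e; rewrite -[LHS]comp_polyXr /comp_poly e.
apply: eq_bigr => i _.
by rewrite nderivn_map horner_map mul_polyC.
Qed.

Lemma size_Ppoly (R : rcfType) s (a : nat -> R) : (size (Ppoly s a) <= s.+1)%N.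
Proof.
rewrite /Ppoly; apply: leq_trans (size_polyD _ _) _.
rewrite geq_max size_poly1 /=.
apply: leq_trans (size_sum _ _ _) _.
apply/bigmax_leqP_seq => k; rewrite mem_iota => /andP[_ hk] _.
apply: leq_trans (size_scale_leq _ _) _.
by rewrite size_polyXn; move: hk; rewrite add1n subn1.
Qed.

Lemma Ppoly_coef (R : rcfType) s (a : nat -> R) j : (1 <= j <= s)%N ->
  (Ppoly s a)`_j = a j.
Proof.
case/andP=> h1 h2.
rewrite /Ppoly coefD coefC (negbTE (lt0n_neq0 h1)) add0r coef_sum.
rewrite (bigD1_seq j) /=; last by rewrite iota_uniq.
  rewrite coefZ coefXn eqxx mulr1 big1 ?addr0 // => k hk.
  by rewrite coefZ coefXn eq_sym (negbTE hk) mulr0.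
by rewrite mem_index_iota h1 ltnS.
Qed.

Lemma Ppoly_coef0 (R : rcfType) s (a : nat -> R) : (Ppoly s a)`_0 = 1.
Proof.
rewrite /Ppoly coefD coefC /= coef_sum big_seq big1 ?addr0 // => k.
by rewrite mem_index_iota => /andP[h _]; rewrite coefZ coefXn eq_sym (negbTE (lt0n_neq0 h)) mulr0.
Qed.

Theorem lemma2p5 (R : rcfType) (s : nat) (a : nat -> R) :
  (3 <= s)%N -> (s <= 8)%N ->
  (forall k : nat, (k <= s)%N -> 0 <= ((Ppoly s a)^`(k)).[- (2 * s)%:R]) ->
  (1 / 2) * (a 1%N ^+ 2 - (1 - a 1%N) ^+ 2 / s%:R) >= a 2%N ->
  Ppoly s a = (1 + ((2 * s)%:R)^-1 *: 'X) ^+ s.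
Proof.
move=> hs3 _ hder hineq.
have hs0 : (0 < s)%N by apply: leq_trans hs3.
set d : R := (2 * s)%:R.
have hd : 0 < d by rewrite ltr0n muln_gt0.
pose b i := (Ppoly s a)^`N(i).[-d].
have hb : forall i, (i <= s)%N -> 0 <= b i.
  move=> i hi; have := hder i hi.
  by rewrite nderivn_def hornerMn pmulrn_lge0 // fact_gt0.
have hP : Ppoly s a = \sum_(i < s.+1) b i *: ('X - (-d)%:P)^+i
  := @taylor_poly _ _ (-d) _ (size_Ppoly R s a).
have hY0 : ('X - (-d)%:P).[0] = d by rewrite hornerD hornerN hornerX hornerC sub0r opprK.
have S0 : 1 = \sum_(i < s.+1) b i * d^+i.
  have := congr1 (fun q => q.[0]) hP; rewrite /= horner_coef0 Ppoly_coef0 horner_sum => ->.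
  by apply: eq_bigr => i _; rewrite hornerZ horner_exp hY0.
have S1 : a 1%N = \sum_(i < s.+1) b i * (d^+i.-1 *+ i).
  have := congr1 (fun q => q^`().[0]) hP.
  rewrite /= horner_coef0 coef_deriv Ppoly_coef ?hs0 // mulr1n => ->.
  rewrite linear_sum /= horner_sum; apply: eq_bigr => i _.
  by rewrite derivZ deriv_exp derivXsubC mul1r hornerZ hornerMn horner_exp hY0.
have S2 : a 2%N *+ 2 = \sum_(i < s.+1) b i * (d^+i.-2 *+ (i * i.-1)).
  have := congr1 (fun q => q^`()^`().[0]) hP.
  rewrite /= horner_coef0 !coef_deriv Ppoly_coef ?(leq_trans _ hs3) // mulr1n => ->.
  rewrite !linear_sum /= horner_sum; apply: eq_bigr => i _.
  rewrite !derivZ deriv_exp derivXsubC mul1r derivMn deriv_exp derivXsubC mul1r.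
  by rewrite hornerZ !hornerMn horner_exp hY0 -mulrnA mulnC.
pose w (i : 'I_s.+1) := b i * d ^+ i.
pose m := d * a 1%N.
have T0 : \sum_(i < s.+1) w i = 1 := esym S0.
have T1 : \sum_(i < s.+1) w i * i%:R = m.
  rewrite /m S1 mulr_sumr; apply: eq_bigr => i _; rewrite /w.
  case: i => [[|k] hi] /=; first by rewrite !mulr0n !mulr0.
  by rewrite -[_ *+ k.+1]mulr_natr exprS; ring.
have T2 : \sum_(i < s.+1) w i * (i%:R * (i%:R - 1)) = d ^+ 2 * (a 2%N *+ 2).
  rewrite S2 mulr_sumr; apply: eq_bigr => i _; rewrite /w.
  case: i => [[|[|k]] hi] /=; first by rewrite !(mul0r, mulr0, mulr0n, muln0, subrr).
    by rewrite !(mul0r, mulr0, mulr0n, muln0, subrr).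
  by rewrite -[_ *+ (_ * _)]mulr_natr natrM -!natr1 !exprS expr0; ring.
have E : \sum_(i < s.+1) w i * (i%:R - m) ^+ 2 =
   \sum_(i < s.+1) w i * (i%:R * (i%:R - 1)) + \sum_(i < s.+1) w i * i%:R
   - (2 * m) * \sum_(i < s.+1) w i * i%:R + m ^+ 2 * \sum_(i < s.+1) w i.
  transitivity (\sum_(i < s.+1) (w i * (i%:R * (i%:R - 1)) + w i * i%:R
     - (2 * m) * (w i * i%:R) + m ^+ 2 * w i)).
    by apply: eq_bigr => i _; ring.
  by rewrite big_split /= sumrB /= big_split /= -!mulr_sumr.
have V : 0 <= \sum_(i < s.+1) w i * (i%:R - m) ^+ 2.
  apply: sumr_ge0 => i _; apply: mulr_ge0; last exact: sqr_ge0.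
  by apply: mulr_ge0; [apply: hb; rewrite -ltnS | apply: exprn_ge0; apply: ltW].
have E2 : \sum_(i < s.+1) w i * (s%:R - i%:R) = s%:R - m.
  transitivity (s%:R * \sum_(i < s.+1) w i - \sum_(i < s.+1) w i * i%:R).
    by rewrite mulr_sumr -sumrB; apply: eq_bigr => i _; ring.
  by rewrite T0 mulr1 T1.
have M : 0 <= \sum_(i < s.+1) w i * (s%:R - i%:R).
  apply: sumr_ge0 => i _; apply: mulr_ge0.
    by apply: mulr_ge0; [apply: hb; rewrite -ltnS | apply: exprn_ge0; apply: ltW].
  by rewrite subr_ge0 ler_nat -ltnS.
rewrite E T1 T2 T0 in V.
rewrite E2 in M.
have hsR : 3%:R <= s%:R :> R by rewrite ler_nat.
have hdd : d = 2 * s%:R by rewrite /d natrM.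
have hs0R : 0 < s%:R :> R by rewrite ltr0n.
have H2 : 2 * s%:R * a 2%N <= s%:R * a 1%N ^+ 2 - (1 - a 1%N) ^+ 2.
  have -> : s%:R * a 1%N ^+ 2 - (1 - a 1%N) ^+ 2 =
     2 * s%:R * (1 / 2 * (a 1%N ^+ 2 - (1 - a 1%N) ^+ 2 / s%:R)).
    by field; rewrite gt_eqF.
  by rewrite ler_wpM2l // mulr_ge0 // ltW.
move: V M; rewrite /m hdd => V M.
have K : 0 <= s%:R * (a 1%N - 2 * (1 - a 1%N) ^+ 2) by nra.
have K' : 0 <= a 1%N - 2 * (1 - a 1%N) ^+ 2 by rewrite -(pmulr_rge0 _ hs0R).
have K2 : a 1%N <= 1 / 2 by nra.
have ha1 : a 1%N = 1 / 2 by nra.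
have ms : m = s%:R by rewrite /m hdd ha1; field.
rewrite ms subrr in E2.
have hnn : forall i : 'I_s.+1, true -> 0 <= w i * (s%:R - i%:R).
  move=> i _; apply: mulr_ge0.
    by apply: mulr_ge0; [apply: hb; rewrite -ltnS | apply: exprn_ge0; apply: ltW].
  by rewrite subr_ge0 ler_nat -ltnS.
have hw0 : forall i : 'I_s.+1, (i < s)%N -> w i = 0.
  move=> i hi; have /eqP := @psumr_eq0P _ _ _ _ hnn E2 i isT.
  rewrite mulf_eq0 subr_eq0 eqr_nat gtn_eqF // orbF => /eqP //.
have hdn : forall n, d ^+ n != 0 by move=> n; rewrite expf_neq0 // gt_eqF.
have hbi : forall i, (i < s)%N -> b i = 0.
  move=> i hi; have := hw0 (Ordinal (ltnW hi : (i < s.+1)%N)) hi.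
  by rewrite /w /= => /eqP; rewrite mulf_eq0 (negbTE (hdn _)) orbF => /eqP.
rewrite big_ord_recr /= big1 ?add0r in T0; last by move=> i _; apply: hw0 => /=.
rewrite hP big_ord_recr /= big1 ?add0r; last by move=> i _; rewrite hbi // scale0r.
rewrite -hdd.
have -> : 1 + d^-1 *: 'X = d^-1 *: ('X - (-d)%:P).
  by rewrite polyCN opprK scalerDr scale_polyC mulVf ?gt_eqF // addrC.
rewrite exprZn; congr (_ *: _).
apply: (mulIf (hdn s)); rewrite -exprMn mulVf ?gt_eqF // expr1n.
exact: T0.
Qed.
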